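(* Let $S$ be a right loop, $\nu:S\to S/\mathcal Z(S)$ the natural projection, and $\theta:G_S\to G_{S/\mathcal Z(S)}$ the induced surjective group homomorphism $f^S(y,z)\mapsto f^{S/\mathcal Z(S)}(\nu(y),\nu(z))$. Then $\ker\theta$ is isomorphic to a subgroup of the abelian group $\prod_{\mathcal A}\mathcal Z(S)$ for some index set $\mathcal A$ (one may take $\mathcal A$ to be a set of representatives of the cosets $\mathcal Z(S)\circ x$ other than $\mathcal Z(S)$).
   Context: A right loop is a set $S$ with binary operation $\circ$ and two-sided identity $1$ such that each equation $X\circ a=b$ has a unique solution. For $y,z\in S$, $f^S(y,z):S\to S$ sends $x$ to the unique $X$ with $X\circ(y\circ z)=(x\circ y)\circ z$; $G_S\le\mathrm{Sym}(S)$ is generated by all $f^S(y,z)$. A congruence on $S$ is an equivalence relation which is a right subloop of $S\times S$; an invariant right subloop is the class $T$ of $1$ under a congruence, $S/T=\{T\circ x\}$ with $(T\circ x)\circ(T\circ y)=T\circ(x\circ y)$. Centralizing: for congruences $\beta,\gamma$, $\gamma$ centralizes $\beta$ if there is a congruence $(\gamma|\beta)$ on the right loop $\beta\subseteq S\times S$ with: (i) $(x,y)(\gamma|\beta)(u,v)\Rightarrow x\gamma u$; (ii) for $(x,y)\in\beta$, $(u,v)\mapsto u$ is a bijection from the $(\gamma|\beta)$-class of $(x,y)$ to the $\gamma$-class of $x$; (iii) $(x,y)\in\gamma\Rightarrow(x,x)(\gamma|\beta)(y,y)$; (iv) $(x,y)(\gamma|\beta)(u,v)\Rightarrow(y,x)(\gamma|\beta)(v,u)$;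 (v) $(x,y)(\gamma|\beta)(u,v)$, $(y,z)(\gamma|\beta)(v,w)\Rightarrow(x,z)(\gamma|\beta)(u,w)$. The center congruence $\zeta(S)$ is the unique maximal congruence centralized by $S\times S$; the center $\mathcal Z(S)$ is its class of $1$, an invariant right subloop which is an abelian group under $\circ$. *)

(* Defs.v *)
From Stdlib Require Import Classical ClassicalEpsilon FunctionalExtensionality.

Set Implicit Arguments.

Record rloop := RLoop {
  car :> Type;
  rop : car -> car -> car;
  rone : car;
  rone_l : forall x, rop rone x = x;
  rone_r : forall x, rop x rone = x;
  rsolve : forall a b, exists! X, rop X a = b
}.

Arguments rop {r} _ _.
Arguments rone {r}.

Definition rdiv (L : rloop) (b a : L) : L :=
  proj1_sig (constructive_indefinite_description _
    (match rsolve L a b with ex_intro _ x (conj H _) => ex_intro _ x H end)).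

Arguments rdiv {L} b a.

Lemma rdivP (L : rloop) (b a : L) : rop (rdiv b a) a = b.
Proof. unfold rdiv. destruct (constructive_indefinite_description _ _); auto. Qed.

Definition fmap {L : rloop} (y z : L) : L -> L :=
  fun x => rdiv (rop (rop x y) z) (rop y z).

Inductive inG (L : rloop) : (L -> L) -> Prop :=
| inG_id : inG L (fun x => x)
| inG_gen : forall y z, inG L (fmap y z)
| inG_comp : forall g h, inG L g -> inG L h -> inG L (fun x => g (h x))
| inG_inv : forall g h, inG L g -> (forall x, h (g x) = x) ->
                        (forall x, g (h x) = x) -> inG L h.

(* Congruence: an equivalence relation which is a right subloop of L x L
   (contains (1,1) by reflexivity, closed under o and right division). *)
Definition congruence {L : rloop} (R : L -> L -> Prop) : Prop :=
  (forall x, R x x) /\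
  (forall x y, R x y -> R y x) /\
  (forall x y z, R x y -> R y z -> R x z) /\
  (forall a b c d, R a b -> R c d -> R (rop a c) (rop b d)) /\
  (forall a b c d, R a b -> R c d -> R (rdiv c a) (rdiv d b)).

(* A congruence on the right loop beta (a subloop of L x L, operations
   componentwise), given as a relation on pairs supported in beta. *)
Definition congruence_on {L : rloop} (beta : L -> L -> Prop)
    (T : L * L -> L * L -> Prop) : Prop :=
  (forall p q, T p q -> beta (fst p) (snd p) /\ beta (fst q) (snd q)) /\
  (forall p, beta (fst p) (snd p) -> T p p) /\
  (forall p q, T p q -> T q p) /\
  (forall p q r, T p q -> T q r -> T p r) /\
  (forall p q p' q', T p q -> T p' q' ->
      T (rop (fst p) (fst p'), rop (snd p) (snd p'))
        (rop (fst q) (fst q'), rop (snd q) (snd q'))) /\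
  (forall p q p' q', T p q -> T p' q' ->
      T (rdiv (fst p') (fst p), rdiv (snd p') (snd p))
        (rdiv (fst q') (fst q), rdiv (snd q') (snd q))).

Definition centralizes {L : rloop} (gamma beta : L -> L -> Prop) : Prop :=
  exists T : L * L -> L * L -> Prop,
    congruence_on beta T /\
    (forall x y u v, T (x, y) (u, v) -> gamma x u) /\
    (* (ii) (u,v) |-> u is a bijection from the T-class of (x,y) onto the
       gamma-class of x *)
    (forall x y, beta x y ->
       (forall u v v', T (x, y) (u, v) -> T (x, y) (u, v') -> v = v') /\
       (forall u, gamma x u -> exists v, T (x, y) (u, v))) /\
    (forall x y, gamma x y -> T (x, x) (y, y)) /\
    (forall x y u v, T (x, y) (u, v) -> T (y, x) (v, u)) /\
    (forall x y z u v w, T (x, y) (u, v) -> T (y, z) (v, w) -> T (x, z) (u, w)).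

Definition total_rel (L : rloop) : L -> L -> Prop := fun _ _ => True.

Definition is_center_congruence {L : rloop} (zeta : L -> L -> Prop) : Prop :=
  congruence zeta /\ centralizes (@total_rel L) zeta /\
  (forall beta, congruence beta -> centralizes (@total_rel L) beta ->
     forall x y, beta x y -> zeta x y).

Definition center {L : rloop} (zeta : L -> L -> Prop) : L -> Prop :=
  fun z => zeta rone z.

Definition induced_hom {S Q : rloop} (nu : S -> Q) (theta : (S -> S) -> (Q -> Q))
  : Prop :=
  (forall g, inG S g -> inG Q (theta g)) /\
  (forall g h, inG S g -> inG S h ->
     theta (fun x => g (h x)) = (fun x => theta g (theta h x))) /\
  (forall y z, theta (fmap y z) = fmap (nu y) (nu z)).

Definition in_ker {S Q : rloop} (theta : (S -> S) -> (Q -> Q)) (g : S -> S)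
  : Prop := inG S g /\ theta g = (fun x => x).

(* Main.v *)
Require Import Defs.
From Stdlib Require Import Classical ClassicalEpsilon FunctionalExtensionality.

Lemma rdiv_unique (L : rloop) (a b X : L) : rop X a = b -> X = rdiv b a.
Proof.
  intro H. destruct (rsolve L a b) as [x [Hx Hu]].
  rewrite <- (Hu X H). apply Hu, rdivP.
Qed.

Lemma rcancel (L : rloop) (x x' a : L) : rop x a = rop x' a -> x = x'.
Proof.
  intro H. rewrite (rdiv_unique _ _ _ _ H). symmetry. apply rdiv_unique. reflexivity.
Qed.

Lemma rdiv_mul (L : rloop) (x a : L) : rdiv (rop x a) a = x.
Proof. symmetry; apply rdiv_unique; reflexivity. Qed.

Lemma inG_inj (L : rloop) g : inG L g -> forall x y, g x = g y -> x = y.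
Proof.
  induction 1; intros a b E; auto.
  - unfold fmap in E. apply (f_equal (fun t => rop t (rop y z))) in E.
    rewrite !rdivP in E. apply rcancel in E. apply rcancel in E. auto.
  - rewrite <- (H1 a), <- (H1 b), E. reflexivity.
Qed.

Lemma inG_bij (L : rloop) g : inG L g -> exists g', inG L g' /\
  (forall x, g' (g x) = x) /\ (forall x, g (g' x) = x).
Proof.
  induction 1.
  - exists (fun x => x). repeat split; auto. constructor.
  - set (k := fun x' : L => rdiv (rdiv (rop x' (rop y z)) z) y).
    assert (E1 : forall x, k (fmap y z x) = x).
    { intro x. unfold k, fmap. rewrite rdivP, !rdiv_mul. reflexivity. }
    assert (E2 : forall x, fmap y z (k x) = x).
    { intro x. unfold k, fmap. rewrite !rdivP, rdiv_mul. reflexivity. }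
    exists k. repeat split; auto. apply inG_inv with (g := fmap y z); auto. constructor.
  - destruct IHinG1 as [g' [G1 [G2 G3]]]. destruct IHinG2 as [h' [H1 [H2 H3]]].
    exists (fun x => h' (g' x)). repeat split.
    + constructor; auto.
    + intro x. rewrite G2, H2; auto.
    + intro x. rewrite H3, G3; auto.
  - exists g. repeat split; auto.
Qed.

Section Main.
Variables (S Q : rloop) (nu : S -> Q).
Hypothesis numul : forall x y, nu (rop x y) = rop (nu x) (nu y).

Lemma nu_rdiv (b a : S) : nu (rdiv b a) = rdiv (nu b) (nu a).
Proof. apply rdiv_unique. rewrite <- numul, rdivP. reflexivity. Qed.

Lemma nu_fmap y z x : nu (fmap y z x) = fmap (nu y) (nu z) (nu x).
Proof. unfold fmap. rewrite nu_rdiv, !numul. reflexivity. Qed.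

Lemma theta_id theta : induced_hom nu theta -> theta (fun x => x) = (fun x => x).
Proof.
  intros [T1 [T2 T3]].
  assert (I : inG S (fun x : S => x)) by constructor.
  pose proof (T2 _ _ I I) as E. simpl in E.
  extensionality q. apply (inG_inj _ _ (T1 _ I)).
  symmetry; exact (f_equal (fun f => f q) E).
Qed.

Lemma theta_nu theta : induced_hom nu theta ->
  forall g, inG S g -> forall x, nu (g x) = theta g (nu x).
Proof.
  intros Hth. pose proof (theta_id theta Hth) as Tid. destruct Hth as [T1 [T2 T3]].
  induction 1; intro x.
  - rewrite Tid; reflexivity.
  - rewrite T3. apply nu_fmap.
  - rewrite (T2 _ _ H H0). simpl. rewrite IHinG1, IHinG2. reflexivity.
  - assert (E : theta (fun x => h (g x)) = theta (fun x => x)).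
    { f_equal. extensionality t. auto. }
    assert (HG : inG S h) by (apply inG_inv with (g := g); auto).
    rewrite (T2 _ _ HG H), Tid in E.
    rewrite <- (f_equal (fun f => f (nu (h x))) E). simpl.
    rewrite <- IHinG, H1. reflexivity.
Qed.
End Main.


Section Part1.
Variables (S Q : rloop) (nu : S -> Q).
Hypothesis numul : forall x y, nu (rop x y) = rop (nu x) (nu y).
Variable sec : Q -> S.
Hypothesis secK : forall q, nu (sec q) = q.

Definition theta0 (g : S -> S) : Q -> Q := fun q => nu (g (sec q)).

Lemma theta0_fmap y z : theta0 (fmap y z) = fmap (nu y) (nu z).
Proof. extensionality q. unfold theta0. rewrite nu_fmap, secK; auto. Qed.

Lemma theta0_id : theta0 (fun x => x) = (fun x => x).
Proof. extensionality q. apply secK. Qed.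

Lemma theta0_comp g h : (forall x, nu (g x) = theta0 g (nu x)) ->
  theta0 (fun x => g (h x)) = (fun q => theta0 g (theta0 h q)).
Proof. intro Hg. extensionality q. unfold theta0 at 1. rewrite Hg. reflexivity. Qed.

Lemma P_all g : inG S g -> inG Q (theta0 g) /\ forall x, nu (g x) = theta0 g (nu x).
Proof.
  induction 1.
  - rewrite theta0_id. split. constructor. auto.
  - rewrite theta0_fmap. split. constructor. intro x. apply nu_fmap; auto.
  - destruct IHinG1 as [A1 B1]. destruct IHinG2 as [A2 B2].
    rewrite (theta0_comp _ h B1). split. constructor; auto.
    intro x. rewrite B1, B2. reflexivity.
  - destruct IHinG as [A1 B1].
    assert (Resp : forall x, nu (h x) = theta0 h (nu x)).
    { intro x. unfold theta0. apply (inG_inj _ _ A1). rewrite <- !B1, !H1, secK. reflexivity. }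
    split; auto.
    apply inG_inv with (g := theta0 g); auto.
    + intro q. unfold theta0 at 2. rewrite <- Resp, H0, secK. reflexivity.
    + intro q. unfold theta0 at 2. rewrite <- B1, H1, secK. reflexivity.
Qed.

Lemma theta0_hom : induced_hom nu theta0.
Proof.
  split; [|split].
  - intros g Hg. apply (P_all g Hg).
  - intros g h Hg Hh. apply theta0_comp. apply (P_all g Hg).
  - apply theta0_fmap.
Qed.

Lemma theta0_surj k : inG Q k -> exists g, inG S g /\ theta0 g = k.
Proof.
  induction 1.
  - exists (fun x => x). split. constructor. apply theta0_id.
  - exists (fmap (sec y) (sec z)). split. constructor. rewrite theta0_fmap, !secK. reflexivity.
  - destruct IHinG1 as [g1 [A1 B1]]. destruct IHinG2 as [h1 [A2 B2]].
    exists (fun x => g1 (h1 x)). split. constructor; auto.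
    rewrite theta0_comp. subst; reflexivity. apply (P_all _ A1).
  - destruct IHinG as [g1 [A1 B1]].
    destruct (inG_bij _ _ A1) as [g' [C1 [C2 C3]]].
    exists g'. split; auto.
    assert (E : theta0 (fun x => g' (g1 x)) = theta0 (fun x => x)).
    { f_equal. extensionality t. auto. }
    rewrite theta0_id, theta0_comp, B1 in E by (apply (P_all _ C1)).
    extensionality q. rewrite <- (H1 q) at 1.
    exact (f_equal (fun f => f (h q)) E).
Qed.
End Part1.


Section Part2.
Variables (S : rloop) (zeta : S -> S -> Prop) (T : S * S -> S * S -> Prop).
Hypothesis Trefl : forall p, zeta (fst p) (snd p) -> T p p.
Hypothesis Tmul : forall p q p' q', T p q -> T p' q' ->
      T (rop (fst p) (fst p'), rop (snd p) (snd p'))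
        (rop (fst q) (fst q'), rop (snd q) (snd q')).
Hypothesis Tuniq : forall x y, zeta x y ->
       (forall u v v', T (x, y) (u, v) -> T (x, y) (u, v') -> v = v').
Hypothesis Tiii : forall x y : S, T (x, x) (y, y).

Lemma T1c c u : zeta rone c -> T (rone, c) (u, rop c u).
Proof.
  intro Hc. pose proof (Tmul _ _ _ _ (Trefl (rone, c) Hc) (Tiii rone u)) as E.
  simpl in E. rewrite !rone_l, rone_r in E. exact E.
Qed.

Lemma center_comm c u : zeta rone c -> rop c u = rop u c.
Proof.
  intro Hc. pose proof (Tmul _ _ _ _ (Tiii rone u) (Trefl (rone, c) Hc)) as E.
  simpl in E. rewrite !rone_l, rone_r in E.
  exact (Tuniq _ _ Hc _ _ _ (T1c _ u Hc) E).
Qed.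

Lemma center_assoc c u w : zeta rone c -> rop (rop c u) w = rop c (rop u w).
Proof.
  intro Hc. pose proof (Tmul _ _ _ _ (T1c _ u Hc) (Tiii rone w)) as E.
  simpl in E. rewrite !rone_l, rone_r in E.
  exact (Tuniq _ _ Hc _ _ _ E (T1c _ _ Hc)).
Qed.

Lemma rdiv_center c b a : zeta rone c -> rdiv (rop c b) a = rop c (rdiv b a).
Proof.
  intro Hc. symmetry; apply rdiv_unique. rewrite center_assoc, rdivP; auto.
Qed.

Lemma G_commute c g : zeta rone c -> inG S g -> forall x, g (rop c x) = rop c (g x).
Proof.
  intros Hc. induction 1; intro x; auto.
  - unfold fmap. rewrite !(center_assoc c) by auto. rewrite rdiv_center by auto. reflexivity.
  - rewrite IHinG2, IHinG1. reflexivity.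
  - rewrite <- (H1 x) at 1. rewrite <- IHinG, H0. reflexivity.
Qed.
End Part2.

Theorem mainTheorem12 (S Q : rloop) (zeta : S -> S -> Prop) (nu : S -> Q) :
  is_center_congruence zeta ->
  (* nu : S -> Q = S/Z(S) is the natural projection *)
  (forall x y, nu (rop x y) = rop (nu x) (nu y)) ->
  (forall q : Q, exists x, nu x = q) ->
  (forall x y, nu x = nu y <-> zeta x y) ->
  (* the induced surjective homomorphism theta exists ... *)
  (exists theta, induced_hom nu theta /\
     forall k, inG Q k -> exists g, inG S g /\ theta g = k) /\
  (* ... and its kernel embeds in a direct power of Z(S) *)
  (forall theta, induced_hom nu theta ->
     exists (A : Type) (phi : (S -> S) -> A -> S),
       (forall g, in_ker theta g -> forall a, center zeta (phi g a)) /\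
       (forall g h, in_ker theta g -> in_ker theta h ->
          phi (fun x => g (h x)) = (fun a => rop (phi g a) (phi h a))) /\
       (forall g h, in_ker theta g -> in_ker theta h -> phi g = phi h -> g = h)).
Proof.
  intros Hz numul nusurj nuzeta.
  destruct (constructive_indefinite_description _
     (choice (fun (q : Q) (x : S) => nu x = q) nusurj)) as [sec secK].
  split.
  - exists (@theta0 _ _ nu sec). split. apply theta0_hom; auto.
    intros k Hk. apply theta0_surj; auto.
  - intros theta Hth.
    destruct Hz as [Cz [[T [[Tsupp [Trefl [Tsym [Ttrans [Tmul Tdiv]]]]] [Ti [Tii [Tiii [Tiv Tv]]]]]] Hmax]].
    assert (Tuniq : forall x y, zeta x y ->
       (forall u v v', T (x, y) (u, v) -> T (x, y) (u, v') -> v = v')).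
    { intros x y Hxy. apply (proj1 (Tii x y Hxy)). }
    assert (Tiii' : forall x y : S, T (x, x) (y, y)) by (intros; apply Tiii; exact I).
    destruct Cz as [Zr [Zs [Zt [Zm Zd]]]].
    assert (Kz : forall g, in_ker theta g -> forall x, zeta x (g x)).
    { intros g [Hg Hk] x. apply nuzeta. rewrite (theta_nu _ _ nu numul _ Hth _ Hg), Hk. reflexivity. }
    assert (Cen : forall g, in_ker theta g -> forall a, zeta rone (rdiv (g a) a)).
    { intros g Hg a. pose proof (Zd a a a (g a) (Zr a) (Kz g Hg a)) as E.
      rewrite <- (rdiv_unique _ a a rone (rone_l _ a)) in E. exact E. }
    exists S, (fun g a => rdiv (g a) a). split; [|split].
    + intros g Hg a. apply Cen; auto.
    + intros g h Hg Hh. extensionality a.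
      symmetry; apply rdiv_unique.
      pose proof (Cen g Hg a) as Cg. pose proof (Cen h Hh a) as Ch.
      rewrite (center_comm _ _ _ Trefl Tmul Tuniq Tiii' _ _ Cg).
      rewrite (center_assoc _ _ _ Trefl Tmul Tuniq Tiii' _ _ _ Ch), rdivP.
      rewrite <- (G_commute _ _ _ Trefl Tmul Tuniq Tiii' _ _ Ch (proj1 Hg)), rdivP. reflexivity.
    + intros g h Hg Hh E. extensionality a.
      pose proof (f_equal (fun f => rop (f a) a) E) as E'. simpl in E'.
      rewrite !rdivP in E'. exact E'.
Qed.
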